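(* Let $G$ be a connected graph on $n\ge2$ vertices, $\alpha\in\mathbb{R}$, with vertices labeled so that, writing $s_k=({}^\alpha\mathbb{M})_k+\mathbb{D}_k$, we have $s_1\ge s_2\ge\cdots\ge s_n$. Let $M=\max_{1\le i\le n}\mathbb{D}_i$ and $N=\max_{1\le i\ne j\le n}d_{ij}\mathbb{D}_j^\alpha/\mathbb{D}_i^\alpha$. Then for $1\le i\le n$, \[\rho(\mathbb{DQ}(G))\le \frac{s_i+M-N+\sqrt{(s_i-M+N)^2+4N\sum_{k=1}^{i-1}(s_k-s_i)}}{2}.\] Equality holds if and only if $s_1=\cdots=s_n$, or for some $2\le t\le i$: (i) $\mathbb{D}_k=M$ for $1\le k\le t-1$; (ii) $d_{kl}\mathbb{D}_l^\alpha/\mathbb{D}_k^\alpha=N$ for all $1\le k\le n$, $1\le l\le t-1$, $k\ne l$; (iii) $s_t=\cdots=s_n$.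
   Context: $\mathbb{D}(G)=(d_{ij})$ is the distance matrix of $G$, $\mathbb{D}_i=\sum_j d_{ij}$ the transmission of $v_i$, and $\mathbb{DQ}(G)=\mathrm{diag}(\mathbb{D}_1,\dots,\mathbb{D}_n)+\mathbb{D}(G)$ the distance signless Laplacian matrix. $({}^\alpha\mathbb{M})_i=\frac{\sum_{j=1}^n d_{ij}\mathbb{D}_j^\alpha}{\mathbb{D}_i^\alpha}$ is the generalized average transmission. $\rho$ is the spectral radius. An empty sum equals $0$. *)

(* Defs.v *)
From Stdlib Require Import Reals List Arith Bool.
Import ListNotations.
Open Scope R_scope.

(* Vertices are 0, ..., n-1; the graph is a boolean adjacency relation. *)

Fixpoint sumR (n : nat) (f : nat -> R) : R :=
  match n with
  | O => 0
  | S m => sumR m f + f m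
  end.

Definition simple_graph (n : nat) (adj : nat -> nat -> bool) : Prop :=
  (forall i j, (i < n)%nat -> (j < n)%nat -> adj i j = adj j i) /\
  (forall i, (i < n)%nat -> adj i i = false).

Fixpoint reach (n : nat) (adj : nat -> nat -> bool) (k i j : nat) : bool :=
  match k with
  | O => Nat.eqb i j
  | S k' => existsb (fun l => andb (adj i l) (reach n adj k' l j)) (seq 0 n)
  end.

Definition connected (n : nat) (adj : nat -> nat -> bool) : Prop :=
  forall i j, (i < n)%nat -> (j < n)%nat -> exists k, reach n adj k i j = true.

Fixpoint dist_aux (n : nat) (adj : nat -> nat -> bool) (i j k fuel : nat) : nat :=
  match fuel with
  | O => k
  | S f => if reach n adj k i j then k else dist_aux n adj i j (S k) f
  end.

(* graph distance d_ij (for connected graphs on n vertices it is < n) *)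
Definition dist (n : nat) (adj : nat -> nat -> bool) (i j : nat) : nat :=
  dist_aux n adj i j 0 n.

Definition trans (n : nat) (adj : nat -> nat -> bool) (i : nat) : R :=
  sumR n (fun j => INR (dist n adj i j)).

Definition DQ (n : nat) (adj : nat -> nat -> bool) (i j : nat) : R :=
  (if Nat.eqb i j then trans n adj i else 0) + INR (dist n adj i j).

Definition wratio (n : nat) (adj : nat -> nat -> bool) (alpha : R) (i j : nat) : R :=
  INR (dist n adj i j) * Rpower (trans n adj j) alpha / Rpower (trans n adj i) alpha.

Definition genavg (n : nat) (adj : nat -> nat -> bool) (alpha : R) (i : nat) : R :=
  sumR n (fun j => wratio n adj alpha i j).

Definition sval (n : nat) (adj : nat -> nat -> bool) (alpha : R) (i : nat) : R :=
  genavg n adj alpha i + trans n adj i.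

Definition maxTr (n : nat) (adj : nat -> nat -> bool) : R :=
  fold_right Rmax (trans n adj 0) (map (trans n adj) (seq 0 n)).

Definition maxRatio (n : nat) (adj : nat -> nat -> bool) (alpha : R) : R :=
  fold_right Rmax (wratio n adj alpha 0 1)
    (flat_map (fun i => map (fun j => wratio n adj alpha i j)
                            (filter (fun j => negb (Nat.eqb i j)) (seq 0 n)))
              (seq 0 n)).

Definition eigenvalue (n : nat) (A : nat -> nat -> R) (lam : R) : Prop :=
  exists x : nat -> R,
    (exists i, (i < n)%nat /\ x i <> 0) /\
    (forall i, (i < n)%nat -> sumR n (fun j => A i j * x j) = lam * x i).

(* r is the spectral radius of A (A symmetric, so all eigenvalues are real) *)
Definition is_spectral_radius (n : nat) (A : nat -> nat -> R) (r : R) : Prop :=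
  (exists lam, eigenvalue n A lam /\ Rabs lam = r) /\
  (forall lam, eigenvalue n A lam -> Rabs lam <= r).

(* the upper bound for (0-indexed) vertex i *)
Definition bound7 (n : nat) (adj : nat -> nat -> bool) (alpha : R) (i : nat) : R :=
  let s := sval n adj alpha in
  let M := maxTr n adj in
  let N := maxRatio n adj alpha in
  (s i + M - N +
   sqrt ((s i - M + N) ^ 2 + 4 * N * sumR i (fun k => s k - s i))) / 2.

(* Main.v *)
Require Import Defs.
From Stdlib Require Import Reals List Arith Lia Lra Psatz Classical.
Open Scope R_scope.

Lemma sumR_ext n f g : (forall k, (k < n)%nat -> f k = g k) -> sumR n f = sumR n g.
Proof. induction n; simpl; intros H; [reflexivity|]. rewrite IHn by (intros; apply H; lia). rewrite H by lia. reflexivity. Qed.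

Lemma sumR_le n f g : (forall k, (k < n)%nat -> f k <= g k) -> sumR n f <= sumR n g.
Proof. induction n; simpl; intros H; [lra|]. assert (sumR n f <= sumR n g) by (apply IHn; intros; apply H; lia). assert (f n <= g n) by (apply H; lia). lra. Qed.

Lemma sumR_eq_le n f g : (forall k, (k < n)%nat -> f k <= g k) -> sumR n f = sumR n g -> forall k, (k < n)%nat -> f k = g k.
Proof. induction n; simpl; intros H E k Hk; [lia|].
 assert (A: sumR n f <= sumR n g) by (apply sumR_le; intros; apply H; lia).
 assert (B: f n <= g n) by (apply H; lia).
 destruct (Nat.eq_dec k n) as [->|Hne]; [lra|].
 apply IHn; [intros; apply H; lia| lra | lia]. Qed.

Lemma sumR_plus n f g : sumR n (fun k => f k + g k) = sumR n f + sumR n g.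
Proof. induction n; simpl; [lra|]. rewrite IHn; lra. Qed.

Lemma sumR_scal n c f : sumR n (fun k => c * f k) = c * sumR n f.
Proof. induction n; simpl; [lra|]. rewrite IHn; lra. Qed.

Lemma sumR_zero n : sumR n (fun _ => 0) = 0.
Proof. induction n; simpl; lra. Qed.

Lemma sumR_delta n k a : (k < n)%nat -> sumR n (fun l => if Nat.eqb k l then a else 0) = a.
Proof. induction n; simpl; intros H; [lia|].
 destruct (Nat.eq_dec k n) as [->|Hne].
 - rewrite Nat.eqb_refl. rewrite (sumR_ext n _ (fun _ => 0)).
   + rewrite sumR_zero; lra.
   + intros l Hl. destruct (Nat.eqb_spec n l); [lia|reflexivity].
 - rewrite IHn by lia. destruct (Nat.eqb_spec k n); [lia|lra]. Qed.

Lemma sumR_nonneg n f : (forall k, (k < n)%nat -> 0 <= f k) -> 0 <= sumR n f.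
Proof. intros H. rewrite <- (sumR_zero n). apply sumR_le. exact H. Qed.

Lemma sumR_trunc n i f : (i <= n)%nat -> (forall l, (i <= l)%nat -> (l < n)%nat -> f l = 0) -> sumR n f = sumR i f.
Proof. induction n; intros H1 H2.
 - replace i with 0%nat by lia. reflexivity.
 - destruct (Nat.eq_dec i (S n)) as [->|Hne]; [reflexivity|].
   simpl. rewrite IHn by (try lia; intros; apply H2; lia). rewrite H2 by lia. lra. Qed.

Lemma sumR_ge_first i f : (1 <= i)%nat -> (forall k, (k < i)%nat -> 0 <= f k) -> f O <= sumR i f.
Proof. induction i; intros H1 H2; [lia|]. simpl.
 destruct (Nat.eq_dec i 0) as [->|Hne]; simpl; [lra|].
 assert (f O <= sumR i f) by (apply IHi; [lia| intros; apply H2; lia]).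
 assert (0 <= f i) by (apply H2; lia). lra. Qed.

Lemma argmax n (z : nat -> R) : (1 <= n)%nat -> exists p, (p < n)%nat /\ forall l, (l < n)%nat -> z l <= z p.
Proof. induction n; intros H; [lia|].
 destruct (Nat.eq_dec n 0) as [->|Hne].
 - exists O. split; [lia|]. intros l Hl. replace l with O by lia. lra.
 - destruct IHn as [p [Hp Hmax]]; [lia|].
   destruct (Rle_dec (z n) (z p)).
   + exists p. split; [lia|]. intros l Hl. destruct (Nat.eq_dec l n) as [->|]; [lra|]. apply Hmax; lia.
   + exists n. split; [lia|]. intros l Hl. destruct (Nat.eq_dec l n) as [->|]; [lra|].
     assert (z l <= z p) by (apply Hmax; lia). lra. Qed.

Lemma least_ex0 (P : nat -> Prop) m : (exists j, (j <= m)%nat /\ P j) -> exists t, P t /\ forall l, (l < t)%nat -> ~ P l.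
Proof. induction m; intros [j [Hj HP]].
 - exists O. replace j with O in HP by lia. split; [exact HP|]. intros; lia.
 - destruct (classic (exists l, (l <= m)%nat /\ P l)) as [Hl|Hno].
   + apply IHm; exact Hl.
   + exists j. split; [exact HP|]. intros l Hl HPl. apply Hno. exists l. split; [lia|exact HPl]. Qed.

Lemma least_ex (P : nat -> Prop) m : P m -> exists t, (t <= m)%nat /\ P t /\ forall l, (l < t)%nat -> ~ P l.
Proof. intros H. destruct (least_ex0 P m) as [t [Ht Hmin]]. { exists m; split; [lia|exact H]. }
 exists t. split; [|split; assumption]. destruct (le_lt_dec t m); [assumption|]. exfalso; exact (Hmin m l H). Qed.

Definition Sig (s:nat->R) i := sumR i (fun k => s k - s i).
Definition lamb s M N i := (s i + M - N + sqrt ((s i - M + N) ^ 2 + 4 * N * Sig s i)) / 2.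
Definition ee s M N i l := if (l <? i)%nat then (s l - s i) / (lamb s M N i - M + N) else 0.

Definition Hyps (n:nat) (B: nat->nat->R) (s: nat->R) (M N: R) (i: nat) : Prop :=
 (i < n)%nat /\
 (forall k, (k<n)%nat -> sumR n (B k) = s k) /\
 (forall k l, (k<n)%nat -> (l<n)%nat -> 0 <= B k l) /\
 (forall k l, (k<n)%nat -> (l<n)%nat -> k<>l -> 0 < B k l) /\
 (forall k l, (k<n)%nat -> (l<n)%nat -> k<>l -> B k l <= N) /\
 (forall k, (k<n)%nat -> B k k <= M) /\
 (forall a b, (a <= b)%nat -> (b < n)%nat -> s b <= s a) /\
 0 < N /\ M <= s O.

Lemma mu_root n B s M N i : Hyps n B s M N i ->
  0 < lamb s M N i - M + N /\ (lamb s M N i - s i) * (lamb s M N i - M + N) = N * Sig s i.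
Proof.
 intros (Hi & Hs & Hp & Hpo & HN & HM & Hmono & HNp & HM0).
 assert (HS: 0 <= Sig s i).
 { apply sumR_nonneg; intros. assert (s i <= s k) by (apply Hmono; lia). lra. }
 unfold lamb. set (a := s i - M + N).
 set (X := a ^ 2 + 4 * N * Sig s i).
 assert (HX: 0 <= X) by (unfold X; nra).
 pose proof (sqrt_sqrt X HX). pose proof (sqrt_pos X).
 split.
 - destruct (Rlt_dec 0 a) as [Ha|Ha]; [unfold a in *; lra|].
   assert (Hi0: i <> O). { intro; subst i. unfold a in Ha. lra. }
   assert (HS2: s O - s i <= Sig s i).
   { apply (sumR_ge_first i (fun k => s k - s i)); [lia|]. intros. assert (s i <= s k) by (apply Hmono; lia). lra. }
   assert (0 < Sig s i) by (unfold a in Ha; lra).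
   assert (a ^ 2 < X) by (unfold X; nra).
   assert (- a < sqrt X) by nra.
   unfold a in *. lra.
 - assert (X = a ^2 + 4 * N * Sig s i) by reflexivity.
   unfold a in *. nra.
Qed.


Lemma ee_nonneg n B s M N i l : Hyps n B s M N i -> (l < n)%nat -> 0 <= ee s M N i l.
Proof. intros H Hl. destruct (mu_root n B s M N i H) as [Hmu _].
 destruct H as (Hi & Hs & Hp & Hpo & HN & HM & Hmono & HNp & HM0).
 unfold ee. destruct (Nat.ltb_spec l i); [|lra].
 assert (s i <= s l) by (apply Hmono; lia). unfold Rdiv; apply Rmult_le_pos; [lra|left; apply Rinv_0_lt_compat; lra]. Qed.

Lemma ee_sum n B s M N i : Hyps n B s M N i ->
  N * sumR n (ee s M N i) = lamb s M N i - s i.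
Proof. intros H. destruct (mu_root n B s M N i H) as [Hmu Hr].
 destruct H as (Hi & Hs & Hp & Hpo & HN & HM & Hmono & HNp & HM0).
 rewrite (sumR_trunc n i); [| lia | intros l H1 H2; unfold ee; destruct (Nat.ltb_spec l i); [lia|reflexivity]].
 rewrite (sumR_ext i _ (fun l => / (lamb s M N i - M + N) * (s l - s i))).
 2:{ intros l Hl. unfold ee. destruct (Nat.ltb_spec l i); [|lia]. unfold Rdiv. ring. }
 rewrite sumR_scal. unfold Sig in Hr. rewrite Rmult_comm, Rmult_assoc, (Rmult_comm _ N), <- Hr. field. lra. Qed.

Lemma ee_gap n B s M N i k : Hyps n B s M N i -> (k < n)%nat ->
  s k - s i <= (lamb s M N i - M + N) * ee s M N i k /\ ((k < i)%nat -> s k - s i = (lamb s M N i - M + N) * ee s M N i k).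
Proof. intros H Hk. destruct (mu_root n B s M N i H) as [Hmu Hr].
 destruct H as (Hi & Hs & Hp & Hpo & HN & HM & Hmono & HNp & HM0).
 unfold ee. destruct (Nat.ltb_spec k i).
 - assert (E: s k - s i = (lamb s M N i - M + N) * ((s k - s i) / (lamb s M N i - M + N))) by (field; lra).
   split; [lra|auto].
 - assert (s k <= s i) by (apply Hmono; lia). split; [lra|intros; lia]. Qed.

Definition gg s M N i k l := N * ee s M N i l + (if Nat.eqb k l then (M - N) * ee s M N i k else 0).

Lemma gg_sum n s M N i k : (k < n)%nat ->
  sumR n (gg s M N i k) = N * sumR n (ee s M N i) + (M - N) * ee s M N i k.
Proof. intros Hk. unfold gg. rewrite sumR_plus, sumR_scal, sumR_delta by exact Hk. reflexivity. Qed.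

Lemma term_le n B s M N i k l : Hyps n B s M N i -> (k < n)%nat -> (l < n)%nat ->
  B k l * ee s M N i l <= gg s M N i k l.
Proof. intros H Hk Hl. pose proof (ee_nonneg n B s M N i l H Hl) as He.
 destruct H as (Hi & Hs & Hp & Hpo & HN & HM & Hmono & HNp & HM0).
 unfold gg. destruct (Nat.eqb_spec k l) as [<-|Hne].
 - assert (B k k <= M) by auto. nra.
 - assert (B k l <= N) by auto. nra. Qed.

Lemma row_split n B s M N i k : Hyps n B s M N i -> (k < n)%nat ->
  sumR n (fun l => B k l * (1 + ee s M N i l)) = s k + sumR n (fun l => B k l * ee s M N i l).
Proof. intros H Hk. destruct H as (Hi & Hs & _).
 rewrite (sumR_ext n _ (fun l => B k l + B k l * ee s M N i l)) by (intros; ring).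
 rewrite sumR_plus, Hs by exact Hk. reflexivity. Qed.

Lemma row_le n B s M N i k : Hyps n B s M N i -> (k < n)%nat ->
  sumR n (fun l => B k l * (1 + ee s M N i l)) <= lamb s M N i * (1 + ee s M N i k).
Proof. intros H Hk. rewrite (row_split n B s M N i k H Hk).
 pose proof (ee_sum n B s M N i H). pose proof (gg_sum n s M N i k Hk).
 destruct (ee_gap n B s M N i k H Hk) as [G _].
 assert (sumR n (fun l => B k l * ee s M N i l) <= sumR n (gg s M N i k))
   by (apply sumR_le; intros; apply (term_le n B s M N i k); auto).
 lra. Qed.

Lemma row_eq n B s M N i k : Hyps n B s M N i -> (k < n)%nat ->
  sumR n (fun l => B k l * (1 + ee s M N i l)) = lamb s M N i * (1 + ee s M N i k) ->
  (forall l, (l < n)%nat -> B k l * ee s M N i l = gg s M N i k l) /\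
  s k - s i = (lamb s M N i - M + N) * ee s M N i k.
Proof. intros H Hk E. rewrite (row_split n B s M N i k H Hk) in E.
 pose proof (ee_sum n B s M N i H). pose proof (gg_sum n s M N i k Hk).
 destruct (ee_gap n B s M N i k H Hk) as [G _].
 assert (sumR n (fun l => B k l * ee s M N i l) <= sumR n (gg s M N i k))
   by (apply sumR_le; intros; apply (term_le n B s M N i k); auto).
 split; [|lra].
 apply sumR_eq_le; [intros; apply (term_le n B s M N i k); auto | lra]. Qed.

Lemma row_conv n B s M N i k : Hyps n B s M N i -> (k < n)%nat ->
  (forall l, (l < n)%nat -> B k l * ee s M N i l = gg s M N i k l) ->
  s k - s i = (lamb s M N i - M + N) * ee s M N i k ->
  sumR n (fun l => B k l * (1 + ee s M N i l)) = lamb s M N i * (1 + ee s M N i k).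
Proof. intros H Hk T G. rewrite (row_split n B s M N i k H Hk).
 pose proof (ee_sum n B s M N i H). pose proof (gg_sum n s M N i k Hk).
 rewrite (sumR_ext n _ _ T). lra. Qed.

Lemma Rabs_sumR n f : Rabs (sumR n f) <= sumR n (fun l => Rabs (f l)).
Proof. induction n; simpl. - rewrite Rabs_R0; lra.
 - eapply Rle_trans; [apply Rabs_triang|]. lra. Qed.

Definition eigv n (B : nat -> nat -> R) lam (u : nat -> R) :=
  (exists k, (k < n)%nat /\ u k <> 0) /\
  (forall k, (k < n)%nat -> sumR n (fun l => B k l * u l) = lam * u k).

Lemma CW n B s M N i lam u : Hyps n B s M N i -> eigv n B lam u ->
  Rabs lam <= lamb s M N i /\
  (Rabs lam = lamb s M N i -> forall k, (k < n)%nat ->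
     sumR n (fun l => B k l * (1 + ee s M N i l)) = lamb s M N i * (1 + ee s M N i k)).
Proof. intros H [[k0 [Hk0 Hu0]] Heig].
 set (y := fun l => 1 + ee s M N i l).
 set (lm := lamb s M N i).
 assert (Hy: forall l, (l < n)%nat -> 1 <= y l) by (intros l Hl; unfold y; pose proof (ee_nonneg n B s M N i l H Hl); lra).
 set (z := fun l => Rabs (u l) / y l).
 assert (Hn: (1 <= n)%nat) by lia.
 destruct (argmax n z Hn) as [p [Hp Hmax]].
 assert (Hz0: forall l, (l < n)%nat -> Rabs (u l) = z l * y l).
 { intros l Hl. unfold z. field. pose proof (Hy l Hl). lra. }
 assert (Hzp: 0 < z p).
 { assert (Hzk: z k0 <= z p) by auto. assert (Hak: 0 < Rabs (u k0)) by (apply Rabs_pos_lt; auto).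
   rewrite Hz0 in Hak by auto. pose proof (Hy k0 Hk0). assert (0 < z k0) by nra. lra. }
 destruct H as (Hi & Hs & Hp0 & Hpo & HN & HM & Hmono & HNp & HM0).
 assert (HH: Hyps n B s M N i) by (repeat split; auto).
 assert (Key: forall k, (k < n)%nat -> Rabs lam * Rabs (u k) <= sumR n (fun l => B k l * Rabs (u l))).
 { intros k Hk. rewrite <- Rabs_mult, <- Heig by auto.
   eapply Rle_trans; [apply Rabs_sumR|]. right. apply sumR_ext. intros l Hl.
   rewrite Rabs_mult, (Rabs_right (B k l)); [reflexivity|]. apply Rle_ge; auto. }
 assert (C1: sumR n (fun l => B p l * Rabs (u l)) = sumR n (fun l => B p l * y l * z l)).
 { apply sumR_ext; intros. rewrite Hz0 by auto. ring. }
 assert (C2: sumR n (fun l => B p l * y l * z l) <= sumR n (fun l => B p l * y l * z p)).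
 { apply sumR_le; intros l Hl. assert (z l <= z p) by auto. assert (0 <= B p l) by auto.
   pose proof (Hy l Hl). apply Rmult_le_compat_l; nra. }
 assert (C3: sumR n (fun l => B p l * y l * z p) = z p * sumR n (fun l => B p l * y l)).
 { rewrite <- sumR_scal. apply sumR_ext; intros; ring. }
 assert (C4: sumR n (fun l => B p l * y l) <= lm * y p) by (apply (row_le n B s M N i p HH Hp)).
 assert (Kp := Key p Hp). rewrite (Hz0 p Hp) in Kp.
 pose proof (Hy p Hp).
 assert (Hlm: Rabs lam <= lm).
 { assert (Rabs lam * (z p * y p) <= lm * (z p * y p)) by nra.
   assert (0 < z p * y p) by nra.
   apply Rmult_le_reg_r with (z p * y p); auto. }
 split; [exact Hlm|].
 intros Heq k Hk.
 assert (C5: z p * sumR n (fun l => B p l * y l) <= z p * (lm * y p)) by (apply Rmult_le_compat_l; lra).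
 assert (E: sumR n (fun l => B p l * y l * z l) = sumR n (fun l => B p l * y l * z p)).
 { rewrite Heq in Kp. lra. }
 assert (Zall: forall l, (l < n)%nat -> z l = z p).
 { intros l Hl. destruct (Nat.eq_dec l p) as [->|Hne]; [reflexivity|].
   assert (TL: forall l, (l < n)%nat -> B p l * y l * z l <= B p l * y l * z p).
   { intros l' Hl'. assert (0 <= B p l') by auto. pose proof (Hy l' Hl'). apply Rmult_le_compat_l; [nra|auto]. }
   pose proof (sumR_eq_le n _ _ TL E l Hl) as El.
   assert (0 < B p l) by (apply Hpo; auto). pose proof (Hy l Hl).
   assert (0 < B p l * y l) by nra.
   apply Rmult_eq_reg_l with (B p l * y l); [lra|lra]. }
 assert (Kk := Key k Hk). rewrite (Hz0 k Hk), Zall, Heq in Kk by auto.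
 rewrite (sumR_ext n _ (fun l => z p * (B k l * y l))) in Kk.
 2:{ intros l Hl. rewrite Hz0, Zall by auto. ring. }
 rewrite sumR_scal in Kk.
 assert (lm * y k <= sumR n (fun l => B k l * y l)).
 { apply Rmult_le_reg_l with (z p); auto. lra. }
 assert (sumR n (fun l => B k l * y l) <= lm * y k) by (apply (row_le n B s M N i k HH Hk)).
 unfold y, lm in *. lra.
Qed.

Definition EqCond n (B : nat -> nat -> R) (s : nat -> R) M N i : Prop :=
  (forall k, (k < n)%nat -> s k = s O) \/
  (exists t, (1 <= t)%nat /\ (t <= i)%nat /\
     (forall k, (k < t)%nat -> B k k = M) /\
     (forall k l, (k < n)%nat -> (l < t)%nat -> k <> l -> B k l = N) /\
     (forall k, (t <= k)%nat -> (k < n)%nat -> s k = s t)).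

Lemma only_if n B s M N i : Hyps n B s M N i ->
  (forall k, (k < n)%nat ->
     sumR n (fun l => B k l * (1 + ee s M N i l)) = lamb s M N i * (1 + ee s M N i k)) ->
  EqCond n B s M N i.
Proof. intros H Hrow.
 assert (T := fun k Hk => row_eq n B s M N i k H Hk (Hrow k Hk)).
 destruct (mu_root n B s M N i H) as [Hmu _].
 pose proof H as (Hi & Hs & Hp0 & Hpo & HN & HM & Hmono & HNp & HM0).
 destruct (least_ex (fun t => s t = s i) i eq_refl) as [t [Hti [Hst Hmin]]].
 assert (Epos: forall l, (l < t)%nat -> 0 < ee s M N i l).
 { intros l Hl. assert (s i <= s l) by (apply Hmono; lia). assert (s l <> s i) by auto.
   unfold ee. destruct (Nat.ltb_spec l i); [|lia]. unfold Rdiv. apply Rmult_lt_0_compat; [lra|].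
   apply Rinv_0_lt_compat; lra. }
 assert (Seq: forall k, (t <= k)%nat -> (k < n)%nat -> s k = s i).
 { intros k H1 H2. destruct (le_lt_dec i k).
   - destruct (T k H2) as [_ G]. unfold ee in G. destruct (Nat.ltb_spec k i); [lia|]. lra.
   - assert (s k <= s t) by (apply Hmono; lia). assert (s i <= s k) by (apply Hmono; lia). lra. }
 destruct (Nat.eq_dec t 0) as [Ht0|Ht0].
 - left. intros k Hk. rewrite (Seq k) by lia. rewrite <- (Seq O) by lia. reflexivity.
 - right. exists t. split; [lia|]. split; [exact Hti|]. split; [|split].
   + intros k Hk. destruct (T k ltac:(lia)) as [TT _]. specialize (TT k ltac:(lia)).
     unfold gg in TT. rewrite Nat.eqb_refl in TT. pose proof (Epos k Hk).
     apply Rmult_eq_reg_r with (ee s M N i k); [lra|lra].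
   + intros k l Hk Hl Hkl. destruct (T k Hk) as [TT _]. specialize (TT l ltac:(lia)).
     unfold gg in TT. destruct (Nat.eqb_spec k l); [contradiction|]. pose proof (Epos l Hl).
     apply Rmult_eq_reg_r with (ee s M N i l); [lra|lra].
   + intros k H1 H2. rewrite (Seq k), (Seq t) by lia. reflexivity.
Qed.

Lemma if_dir n B s M N i : Hyps n B s M N i -> EqCond n B s M N i ->
  forall k, (k < n)%nat ->
     sumR n (fun l => B k l * (1 + ee s M N i l)) = lamb s M N i * (1 + ee s M N i k).
Proof. intros H C.
 destruct (mu_root n B s M N i H) as [Hmu _].
 pose proof H as (Hi & Hs & Hp0 & Hpo & HN & HM & Hmono & HNp & HM0).
 assert (G: exists t, (t <= i)%nat /\ (forall k, (k < t)%nat -> B k k = M) /\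
     (forall k l, (k < n)%nat -> (l < t)%nat -> k <> l -> B k l = N) /\
     (forall k, (t <= k)%nat -> (k < n)%nat -> s k = s i)).
 { destruct C as [C|[t [H1 [H2 [H3 [H4 H5]]]]]].
   - exists O. split; [lia|]. split; [intros; lia|]. split; [intros; lia|].
     intros k _ Hk. rewrite (C k Hk), (C i Hi). reflexivity.
   - exists t. split; [auto|]. split; [auto|]. split; [auto|].
     intros k Hk1 Hk2. rewrite (H5 k), (H5 i) by lia. reflexivity. }
 destruct G as [t [Hti [HBM [HBN Hst]]]].
 assert (E0: forall l, (t <= l)%nat -> (l < n)%nat -> ee s M N i l = 0).
 { intros l H1 H2. unfold ee. destruct (Nat.ltb_spec l i); [|reflexivity].
   rewrite (Hst l) by lia. unfold Rdiv. ring. }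
 intros k Hk. apply (row_conv n B s M N i k H Hk).
 - intros l Hl. unfold gg. destruct (Nat.eqb_spec k l) as [<-|Hne].
   + destruct (lt_dec k t).
     * rewrite HBM by auto. ring.
     * rewrite E0 by lia. ring.
   + destruct (lt_dec l t).
     * rewrite HBN by auto. ring.
     * rewrite E0 by lia. ring.
 - destruct (lt_dec k i).
   + apply (ee_gap n B s M N i k H Hk). auto.
   + rewrite (Hst k), (E0 k) by lia. ring.
Qed.

Lemma dist_aux_ge n adj i j k fuel : (k <= Defs.dist_aux n adj i j k fuel)%nat.
Proof. revert k; induction fuel; intros k; simpl; [lia|].
 destruct (reach n adj k i j); [lia|]. specialize (IHfuel (S k)). lia. Qed.

Lemma dist_refl n adj i : (1 <= n)%nat -> Defs.dist n adj i i = O.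
Proof. intros H. unfold Defs.dist. destruct n; [lia|]. simpl. rewrite Nat.eqb_refl. reflexivity. Qed.

Lemma dist_pos n adj i j : (1 <= n)%nat -> i <> j -> (1 <= Defs.dist n adj i j)%nat.
Proof. intros H Hij. unfold Defs.dist. destruct n; [lia|]. simpl.
 destruct (Nat.eqb_spec i j); [contradiction|]. apply dist_aux_ge. Qed.

Lemma Rpower_pos x a : 0 < Rpower x a.
Proof. unfold Rpower. apply exp_pos. Qed.

Lemma fold_ge_init l x : x <= fold_right Rmax x l.
Proof. induction l; simpl; [lra|]. eapply Rle_trans; [exact IHl| apply Rmax_r]. Qed.

Lemma fold_ge_in l x y : In y l -> y <= fold_right Rmax x l.
Proof. induction l; simpl; [tauto|]. intros [->|H]; [apply Rmax_l|].
 eapply Rle_trans; [apply IHl; exact H| apply Rmax_r]. Qed.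

Lemma fold_le l x c : x <= c -> (forall y, In y l -> y <= c) -> fold_right Rmax x l <= c.
Proof. induction l; simpl; intros H1 H2; [exact H1|]. apply Rmax_lub; auto. Qed.

Lemma trans_nonneg n adj k : 0 <= trans n adj k.
Proof. unfold trans. apply sumR_nonneg. intros; apply pos_INR. Qed.

Lemma wratio_nonneg n adj a k l : 0 <= wratio n adj a k l.
Proof. unfold wratio. pose proof (Rpower_pos (trans n adj l) a). pose proof (Rpower_pos (trans n adj k) a).
 pose proof (pos_INR (Defs.dist n adj k l)). unfold Rdiv. apply Rmult_le_pos; [nra|left; apply Rinv_0_lt_compat; lra]. Qed.

Lemma wratio_pos n adj a k l : (1 <= n)%nat -> k <> l -> 0 < wratio n adj a k l.
Proof. intros H Hkl. unfold wratio. pose proof (Rpower_pos (trans n adj l) a). pose proof (Rpower_pos (trans n adj k) a).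
 pose proof (dist_pos n adj k l H Hkl). apply le_INR in H2. simpl in H2.
 unfold Rdiv. apply Rmult_lt_0_compat; [nra|apply Rinv_0_lt_compat; lra]. Qed.

Lemma wratio_refl n adj a k : (1 <= n)%nat -> wratio n adj a k k = 0.
Proof. intros H. unfold wratio. rewrite dist_refl by auto. simpl. unfold Rdiv. ring. Qed.

Definition Bc n adj a k l := (if Nat.eqb k l then trans n adj k else 0) + wratio n adj a k l.

Lemma Bc_DQ n adj a k l : Bc n adj a k l = DQ n adj k l * Rpower (trans n adj l) a / Rpower (trans n adj k) a.
Proof. unfold Bc, DQ, wratio. pose proof (Rpower_pos (trans n adj k) a).
 destruct (Nat.eqb_spec k l) as [<-|]; field; lra. Qed.

Lemma maxRatio_ge n adj a k l : (k < n)%nat -> (l < n)%nat -> k <> l -> wratio n adj a k l <= maxRatio n adj a.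
Proof. intros Hk Hl Hkl. unfold maxRatio. apply fold_ge_in. apply in_flat_map. exists k.
 split; [apply in_seq; lia|]. apply in_map. apply filter_In. split; [apply in_seq; lia|].
 destruct (Nat.eqb_spec k l); [contradiction|reflexivity]. Qed.

Lemma maxTr_ge n adj k : (k < n)%nat -> trans n adj k <= maxTr n adj.
Proof. intros Hk. unfold maxTr. apply fold_ge_in. apply in_map. apply in_seq; lia. Qed.

Lemma hyps_conc n adj a i : (2 <= n)%nat -> (i < n)%nat ->
  (forall i j, (i <= j)%nat -> (j < n)%nat -> sval n adj a j <= sval n adj a i) ->
  Hyps n (Bc n adj a) (sval n adj a) (maxTr n adj) (maxRatio n adj a) i.
Proof. intros Hn Hi Hmono.
 assert (Hs: forall k, (k < n)%nat -> sumR n (Bc n adj a k) = sval n adj a k).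
 { intros k Hk. unfold Bc. cbv beta. rewrite sumR_plus. rewrite sumR_delta by auto. unfold sval, genavg. rewrite Rplus_comm. reflexivity. }
 split; [auto|]. split; [auto|]. split.
 { intros k l _ _. unfold Bc. pose proof (wratio_nonneg n adj a k l). pose proof (trans_nonneg n adj k).
   destruct (Nat.eqb k l); lra. }
 split.
 { intros k l _ _ Hkl. unfold Bc. destruct (Nat.eqb_spec k l); [contradiction|].
   pose proof (wratio_pos n adj a k l ltac:(lia) Hkl). lra. }
 split.
 { intros k l Hk Hl Hkl. unfold Bc. destruct (Nat.eqb_spec k l); [contradiction|].
   pose proof (maxRatio_ge n adj a k l Hk Hl Hkl). lra. }
 split.
 { intros k Hk. unfold Bc. rewrite Nat.eqb_refl, wratio_refl by lia.
   pose proof (maxTr_ge n adj k Hk). lra. }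
 split; [auto|]. split.
 { pose proof (wratio_pos n adj a 0 1 ltac:(lia) ltac:(lia)). unfold maxRatio.
   eapply Rlt_le_trans; [exact H| apply fold_ge_init]. }
 assert (TS: forall k, (k < n)%nat -> trans n adj k <= sval n adj a O).
 { intros k Hk. assert (sval n adj a k <= sval n adj a O) by (apply Hmono; lia).
   assert (0 <= genavg n adj a k) by (unfold genavg; apply sumR_nonneg; intros; apply wratio_nonneg).
   unfold sval in *. lra. }
 unfold maxTr. apply fold_le; [apply TS; lia|].
 intros y Hy. apply in_map_iff in Hy. destruct Hy as [k [<- Hk]]. apply in_seq in Hk. apply TS; lia.
Qed.

Lemma eig_to n adj a lam (x : nat -> R) : ((exists i, (i < n)%nat /\ x i <> 0) /\
    (forall i, (i < n)%nat -> sumR n (fun j => DQ n adj i j * x j) = lam * x i)) ->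
  eigv n (Bc n adj a) lam (fun l => x l / Rpower (trans n adj l) a) .
Proof. intros [[k0 [Hk0 Hx0]] He]. split.
 - exists k0. split; [auto|]. pose proof (Rpower_pos (trans n adj k0) a).
   unfold Rdiv. intro E. apply Rmult_integral in E. destruct E as [E|E]; [contradiction|].
   apply Rinv_neq_0_compat in E; [auto|lra].
 - intros k Hk. pose proof (Rpower_pos (trans n adj k) a).
   rewrite (sumR_ext n _ (fun l => / Rpower (trans n adj k) a * (DQ n adj k l * x l))).
   + rewrite sumR_scal, He by auto. field. lra.
   + intros l Hl. rewrite Bc_DQ. pose proof (Rpower_pos (trans n adj l) a). field. lra.
Qed.

Lemma eig_from n adj a lam y : eigv n (Bc n adj a) lam y ->
  eigenvalue n (DQ n adj) lam.
Proof. intros [[k0 [Hk0 Hx0]] He]. exists (fun l => Rpower (trans n adj l) a * y l). split.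
 - exists k0. split; [auto|]. pose proof (Rpower_pos (trans n adj k0) a).
   intro E. apply Rmult_integral in E. destruct E; lra.
 - intros k Hk. pose proof (Rpower_pos (trans n adj k) a).
   rewrite (sumR_ext n _ (fun l => Rpower (trans n adj k) a * (Bc n adj a k l * y l))).
   + rewrite sumR_scal, He by auto. ring.
   + intros l Hl. rewrite Bc_DQ. field. lra.
Qed.

Theorem theorem7 (n : nat) (adj : nat -> nat -> bool) (alpha : R) (r : R) :
  (2 <= n)%nat ->
  simple_graph n adj ->
  connected n adj ->
  (forall i j, (i <= j)%nat -> (j < n)%nat ->
     sval n adj alpha j <= sval n adj alpha i) ->
  is_spectral_radius n (DQ n adj) r ->
  forall i, (i < n)%nat ->
    r <= bound7 n adj alpha i /\
    (r = bound7 n adj alpha i <->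
      ((forall k, (k < n)%nat -> sval n adj alpha k = sval n adj alpha 0) \/
       (exists t, (1 <= t)%nat /\ (t <= i)%nat /\
          (forall k, (k < t)%nat -> trans n adj k = maxTr n adj) /\
          (forall k l, (k < n)%nat -> (l < t)%nat -> k <> l ->
             wratio n adj alpha k l = maxRatio n adj alpha) /\
          (forall k, (t <= k)%nat -> (k < n)%nat ->
             sval n adj alpha k = sval n adj alpha t)))).
Proof.
 intros Hn _ _ Hmono [[lam0 [[x0 Heig0] Habs]] Hall] i Hi.
 pose proof (hyps_conc n adj alpha i Hn Hi Hmono) as H.
 assert (Hb: bound7 n adj alpha i = lamb (sval n adj alpha) (maxTr n adj) (maxRatio n adj alpha) i) by reflexivity.
 rewrite Hb. clear Hb.
 pose proof (eig_to n adj alpha lam0 x0 Heig0) as Ev.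
 destruct (CW _ _ _ _ _ i _ _ H Ev) as [Hle Heq].
 assert (HBk: forall k, (k < n)%nat -> Bc n adj alpha k k = trans n adj k).
 { intros k Hk. unfold Bc. rewrite Nat.eqb_refl, wratio_refl by lia. ring. }
 assert (HBkl: forall k l, k <> l -> Bc n adj alpha k l = wratio n adj alpha k l).
 { intros k l Hkl. unfold Bc. destruct (Nat.eqb_spec k l); [contradiction|ring]. }
 split; [lra|]. split.
 - intros Hr. rewrite <- Habs in Hr.
   destruct (only_if _ _ _ _ _ _ H (Heq Hr)) as [C|[t [H1 [H2 [H3 [H4 H5]]]]]]; [left; exact C|].
   right. exists t. split; [auto|]. split; [auto|]. split; [|split; [|auto]].
   + intros k Hk. rewrite <- HBk by lia. auto.
   + intros k l Hk Hl Hkl. rewrite <- HBkl by auto. auto.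
 - intros C.
   assert (C': EqCond n (Bc n adj alpha) (sval n adj alpha) (maxTr n adj) (maxRatio n adj alpha) i).
   { destruct C as [C|[t [H1 [H2 [H3 [H4 H5]]]]]]; [left; exact C|].
     right. exists t. split; [auto|]. split; [auto|]. split; [|split; [|auto]].
     + intros k Hk. rewrite HBk by lia. auto.
     + intros k l Hk Hl Hkl. rewrite HBkl by auto. auto. }
   pose proof (if_dir _ _ _ _ _ _ H C') as R.
   set (lm := lamb (sval n adj alpha) (maxTr n adj) (maxRatio n adj alpha) i) in *.
   assert (Ey: eigv n (Bc n adj alpha) lm (fun l => 1 + ee (sval n adj alpha) (maxTr n adj) (maxRatio n adj alpha) i l)).
   { split; [|exact R]. exists O. split; [lia|].
     pose proof (ee_nonneg _ _ _ _ _ i O H ltac:(lia)). lra. }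
   pose proof (Hall _ (eig_from _ _ _ _ _ Ey)).
   pose proof (Rle_abs lm). lra.
Qed.
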